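(* For all $n\in\mathbb{N}$ and $a,b,c\in\mathbb{C}$ with $b\notin\mathbb{Z}^-$: \begin{align*} \sum_{j=0}^{n}\sum_{i=0}^{j}\frac{\binom{2n+a+2}{i}}{\binom{2n+1}{j}}&=\sum_{k=0}^{n}\frac{n+1}{2k+1}\,\frac{\binom{2k+a}{k}}{\binom{2k}{k}},\\ \sum_{j=0}^{n}\sum_{i=0}^{j}\frac{\binom{2n+3}{i}}{\binom{2n+b+1}{j}}&=\sum_{k=0}^{n}\frac{2n+b+2}{k+b+1}\,\frac{\binom{2k+1}{k}+\frac{4^k b}{k+1}}{\binom{2k+b+2}{k+1}},\\ \sum_{j=0}^{n}\sum_{i=0}^{j}\frac{\binom{n+1}{i}}{\binom{n+b}{j}}\,c^{j-i}&=\sum_{k=0}^{n}\frac{n+b+1}{b+1}\,\frac{(c+1)^k}{\binom{k+b+1}{k}},\\ \sum_{j=0}^{n}\sum_{i=0}^{j}\frac{\binom{n+2}{i}}{\binom{n}{j}}\,c^{j-i+1}&=\sum_{k=0}^{n}\frac{n+1}{k+1}\left((c+1)^{k+1}-1\right). \end{align*}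
   Context: For $x\in\mathbb{C}$, $i\in\mathbb{N}$: $\binom{x}{i}=x(x-1)\cdots(x-i+1)/i!$. $\mathbb{Z}^-=\{-1,-2,\dots\}$. Here $c^0=1$ for every $c$. *)

(* Defs.v *)
From HB Require Import structures.
From mathcomp Require Import all_boot all_order all_algebra.
Set Implicit Arguments. Unset Strict Implicit. Unset Printing Implicit Defensive.
Import Order.TTheory GRing.Theory Num.Theory.
Local Open Scope ring_scope.

Definition binomC (R : fieldType) (x : R) (i : nat) : R :=
  (\prod_(k < i) (x - (k : nat)%:R)) / (i`!)%:R.

(* Main.v *)
Require Import Defs.
From HB Require Import structures.
From mathcomp Require Import all_boot all_order all_algebra ring lra zify.
Import Order.TTheory GRing.Theory Num.Theory.
Lemma half_sum n : (\sum_(0 <= i < n.+2) 'C(2 * n + 3, i) = 4 ^ n.+1)%N.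
Proof.
have tot : (\sum_(0 <= i < 2 * n + 4) 'C(2 * n + 3, i) = 2 ^ (2 * n + 3))%N.
  rewrite -[2 ^ _]/((1+1) ^ (2*n+3)) Pascal big_mkord.
  have -> : (2*n+4 = (2*n+3).+1)%N by lia.
  apply: eq_bigr => i _; by rewrite !exp1n !muln1.
have sym : (\sum_(0 <= i < n.+2) 'C(2 * n + 3, i) = \sum_(n.+2 <= i < 2 * n + 4) 'C(2 * n + 3, i))%N.
  rewrite -[in RHS](add0n n.+2) big_addn big_nat_rev /=.
  have -> : (2 * n + 4 - n.+2 = n.+2)%N by lia.
  apply: eq_big_nat => i /andP[_ hi].
  rewrite -bin_sub; last by lia.
  congr 'C(_, _); lia.
rewrite (big_cat_nat _ (n := n.+2)) /= in tot; try lia.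
rewrite -sym in tot.
have e : (2 ^ (2 * n + 3) = 2 * 4 ^ n.+1)%N by rewrite -[4]/(2^2) -expnM -expnS; congr (2 ^ _); lia.
lia.
Qed.

Local Open Scope ring_scope.



Section S.
Variable C : numClosedFieldType.
Implicit Types (x y c : C).

Definition P (x : C) (i : nat) : C := \prod_(k < i) (x - (k : nat)%:R).

Lemma binomCE x i : binomC x i = P x i / (i`!)%:R.
Proof. by []. Qed.

Lemma fact_neq0 i : (i`!)%:R != 0 :> C.
Proof. by rewrite pnatr_eq0 -lt0n fact_gt0. Qed.

Lemma natS_neq0 i : 1 + i%:R != 0 :> C.
Proof. by rewrite addrC natr1 pnatr_eq0. Qed.

Lemma nat2_neq0 i : 2 + i%:R != 0 :> C.
Proof. by rewrite -natrD pnatr_eq0. Qed.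

Lemma nat_nz (m : nat) (e : C) : e = (m.+1)%:R -> e != 0.
Proof. by move=> ->; rewrite pnatr_eq0. Qed.

Lemma PS x i : P x i.+1 = P x i * (x - i%:R).
Proof. by rewrite /P big_ord_recr. Qed.

Lemma PS1 x i : P (x + 1) i.+1 = (x + 1) * P x i.
Proof.
rewrite /P big_ord_recl subr0; congr (_ * _); apply: eq_bigr => k _.
rewrite /bump /= -natr1; ring.
Qed.

Lemma binomC0 x : binomC x 0 = 1.
Proof. by rewrite binomCE /P big_ord0 fact0 divr1. Qed.

Lemma binomC1 x : binomC x 1 = x.
Proof. by rewrite binomCE /P big_ord1 subr0 divr1. Qed.

Lemma binomC_pascal x i : binomC (x + 1) i.+1 = binomC x i.+1 + binomC x i.
Proof.
rewrite !binomCE PS1 PS factS natrM.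
field. by rewrite fact_neq0 natS_neq0.
Qed.

Lemma binomC_relb y j : (y + 1) * binomC y j = (j.+1)%:R * binomC (y + 1) j.+1.
Proof.
rewrite !binomCE PS1 factS natrM.
field. by rewrite fact_neq0 natS_neq0.
Qed.

Lemma binomC_rela y j : (y + 1) * binomC y j = (y + 1 - j%:R) * binomC (y + 1) j.
Proof.
rewrite !binomCE.
have := PS (y + 1) j. rewrite PS1 => e.
have h1 := fact_neq0 j.
rewrite !mulrA e; ring.
Qed.

Lemma binomC_neq0 y j : (forall k, (k < j)%N -> y != k%:R) -> binomC y j != 0.
Proof.
move=> h; rewrite binomCE mulf_neq0 ?invr_eq0 ?fact_neq0 //.
rewrite /P prodf_seq_neq0; apply/allP => k _ /=.
by rewrite subr_eq0 h.
Qed.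

Lemma binomC_nat (m i : nat) : binomC (m%:R : C) i = ('C(m, i))%:R.
Proof.
elim: m i => [|m IH] [|i]; rewrite ?binomC0 ?bin0 //.
  by rewrite binomCE /P big_ord_recl subrr !mul0r.
by rewrite -natr1 binomC_pascal !IH binS natrD.
Qed.

Definition T x c (j : nat) := \sum_(0 <= i < j.+1) binomC x i * c ^+ (j - i).
Definition G x y c (N : nat) :=
  \sum_(0 <= j < N) \sum_(0 <= i < j.+1) binomC x i / binomC y j * c ^+ (j - i).

Lemma G_T x y c N : G x y c N = \sum_(0 <= j < N) T x c j / binomC y j.
Proof.
apply: eq_bigr => j _; rewrite /T big_distrl; apply: eq_bigr => i _.
by rewrite mulrAC.
Qed.

Lemma T0 x c : T x c 0 = 1.
Proof. by rewrite /T big_nat1 binomC0 subnn expr0 mulr1. Qed.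

Lemma T_pascal x c j : T (x + 1) c j.+1 = T x c j.+1 + T x c j.
Proof.
rewrite /T big_nat_recl // binomC0 [X in _ = X + _]big_nat_recl // binomC0 -addrA.
congr (_ + _); rewrite -big_split; apply: eq_bigr => i _.
by rewrite binomC_pascal subSS mulrDl.
Qed.

Lemma termwise x y c j : y + 1 != 0 -> binomC y j != 0 ->
  T x c j / binomC (y + 1) j + T x c j / binomC (y + 1) j.+1
  = (y + 2) / (y + 1) * (T x c j / binomC y j).
Proof.
move=> hy hQ.
have hyQ : (y + 1) * binomC y j != 0 by rewrite mulf_neq0.
have ra := binomC_rela y j. have rb := binomC_relb y j.
have hd : y + 1 - j%:R != 0.
  by apply: contraNneq hyQ => e; rewrite ra e mul0r.
have hj : (j.+1)%:R != 0 :> C by rewrite pnatr_eq0.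
have hA : binomC (y + 1) j = (y + 1) * binomC y j / (y + 1 - j%:R).
  by rewrite ra mulrAC mulfV // mul1r.
have hB : binomC (y + 1) j.+1 = (y + 1) * binomC y j / (j.+1)%:R.
  by rewrite rb mulrAC mulfV // mul1r.
rewrite hA hB. field. by rewrite hQ hy natS_neq0 hd.
Qed.

Lemma G_step x y c N : y + 1 != 0 -> (forall j, (j < N)%N -> binomC y j != 0) ->
  G (x + 1) (y + 1) c N.+1 = (y + 2) / (y + 1) * G x y c N + T x c N / binomC (y + 1) N.
Proof.
move=> hy hQ; rewrite !G_T.
have -> : \sum_(0 <= j < N.+1) T (x + 1) c j / binomC (y + 1) j =
   \sum_(0 <= j < N.+1) T x c j / binomC (y + 1) j
   + \sum_(0 <= j < N) T x c j / binomC (y + 1) j.+1.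
  rewrite big_nat_recl // [X in _ = X + _]big_nat_recl // !T0 -addrA; congr (_ + _).
  rewrite -big_split; apply: eq_bigr => j _; by rewrite T_pascal mulrDl.
rewrite big_nat_recr //= addrAC; congr (_ + _).
rewrite -big_split big_distrr; apply: eq_big_nat => j /andP[_ hj] /=.
by rewrite termwise // hQ.
Qed.

Lemma T_binom (m : nat) c : T (m%:R) c m = (c + 1) ^+ m.
Proof.
rewrite /T exprDn big_mkord; apply: eq_bigr => i _.
by rewrite binomC_nat expr1n mulr1 mulr_natl.
Qed.

Lemma T_rec x c j : T x c j.+1 = c * T x c j + binomC x j.+1.
Proof.
rewrite /T big_nat_recr //= subnn expr0 mulr1; congr (_ + _).
rewrite big_distrr; apply: eq_big_nat => i /andP[_ hi] /=.
by rewrite subSn // exprS; ring.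
Qed.

Lemma id4_G (c : C) n : c * G (n.+2)%:R n%:R c n.+1
  = \sum_(0 <= k < n.+1) (n.+1)%:R / (k.+1)%:R * ((c + 1) ^+ k.+1 - 1).
Proof.
elim: n => [|n IH].
  rewrite /G !big_nat1 !binomC0 subnn expr0 divr1 expr1 !mul1r mulr1 addrK. done.
have -> : (n.+3)%:R = (n.+2)%:R + 1 :> C by rewrite -natr1.
have -> : (n.+1)%:R = n%:R + 1 :> C by rewrite -natr1.
rewrite G_step; last first.
- move=> j hj; rewrite binomC_nat pnatr_eq0 -lt0n bin_gt0; lia.
- by rewrite natr1 pnatr_eq0.
have hT := T_rec (n.+2)%:R c n.+1.
rewrite T_binom binomC_nat binn in hT.
have -> : binomC (n%:R + 1 : C) n.+1 = 1 by rewrite natr1 binomC_nat binn.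
rewrite [RHS]big_nat_recr //=.
have -> : \sum_(0 <= k < n.+1) (n.+2)%:R / (k.+1)%:R * ((c + 1) ^+ k.+1 - 1)
  = (n.+2)%:R / (n.+1)%:R * \sum_(0 <= k < n.+1) (n.+1)%:R / (k.+1)%:R * ((c + 1) ^+ k.+1 - 1).
  rewrite big_distrr; apply: eq_bigr => k _ /=; field.
  by rewrite !natS_neq0.
rewrite -IH hT. field. by rewrite nat2_neq0 natS_neq0.
Qed.

Lemma binn_neq0 (m j : nat) : (j <= m)%N -> binomC (m%:R : C) j != 0.
Proof. by move=> hj; rewrite binomC_nat pnatr_eq0 -lt0n bin_gt0. Qed.

Lemma G_split x y c N : G x y c N.+1 = G x y c N + T x c N / binomC y N.
Proof. by rewrite !G_T big_nat_recr. Qed.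

Lemma id1_G (a : C) n : G ((2 * n)%:R + a + 2) (2 * n + 1)%:R 1 n.+1
  = \sum_(0 <= k < n.+1) (n.+1)%:R / (2 * k + 1)%:R * (binomC ((2 * k)%:R + a) k / binomC (2 * k)%:R k).
Proof.
elim: n => [|n IH].
  rewrite /G !big_nat1 !binomC0 subnn expr0 !divr1 !mulr1. done.
set x := (2 * n)%:R + a + 2.
set y := ((2 * n + 1)%:R : C).
have -> : (2 * n.+1)%:R + a + 2 = x + 1 + 1 by rewrite /x; ring.
have -> : ((2 * n.+1 + 1)%:R : C) = y + 1 + 1 by rewrite /y; ring.
have hy1 : y + 1 = (2 * n + 2)%:R by rewrite /y; ring.
rewrite G_step; last first.
- move=> j hj; rewrite hy1; apply: binn_neq0; lia.
- by rewrite hy1 natr1 pnatr_eq0.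
rewrite G_step; last first.
- move=> j hj; apply: binn_neq0; lia.
- by rewrite hy1 pnatr_eq0 addn2.
have -> : G x y 1 n = G x y 1 n.+1 - T x 1 n / binomC y n by rewrite G_split; ring.
rewrite IH T_pascal T_rec mul1r.
have hQ : binomC y n != 0 by apply: binn_neq0; lia.
have ra := binomC_rela y n. have rb := binomC_relb y n. have rb2 := binomC_relb (y + 1) n.
rewrite [RHS]big_nat_recr //=.
have -> : (2 * n.+1)%:R + a = x by rewrite /x; ring.
have -> : ((2 * n.+1)%:R : C) = y + 1 by rewrite /y; ring.
have -> : \sum_(0 <= k < n.+1) (n.+2)%:R / (2 * k + 1)%:R * (binomC ((2 * k)%:R + a) k / binomC (2 * k)%:R k)
  = (n.+2)%:R / (n.+1)%:R * \sum_(0 <= k < n.+1) (n.+1)%:R / (2 * k + 1)%:R * (binomC ((2 * k)%:R + a) k / binomC (2 * k)%:R k).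
  rewrite big_distrr; apply: eq_bigr => k _ /=; field.
  rewrite binn_neq0 //=; last by lia.
  rewrite natS_neq0 andbT; apply: (@nat_nz (2 * k)); ring.
have hd : y + 1 - n%:R != 0 by apply: (@nat_nz n.+1); rewrite /y; ring.
have hn1 : (n.+1)%:R != 0 :> C by rewrite pnatr_eq0.
have e1 : binomC (y + 1) n = (y + 1) * binomC y n / (y + 1 - n%:R).
  by rewrite ra mulrAC mulfV // mul1r.
have e2 : binomC (y + 1) n.+1 = (y + 1) * binomC y n / (n.+1)%:R.
  by rewrite rb mulrAC mulfV // mul1r.
have e3 : binomC (y + 1 + 1) n.+1 = (y + 1 + 1) * binomC (y + 1) n / (n.+1)%:R.
  by rewrite rb2 mulrAC mulfV // mul1r.
rewrite e3 e1 e2.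
set S := \sum_(0 <= k < n.+1) _.
move: hQ hd; rewrite /y => hQ hd.
field.
rewrite natS_neq0 hQ /=; apply/and3P; split;
  [apply: (@nat_nz (2*n+1)) | apply: (@nat_nz (2*n+2)) | apply: (@nat_nz n.+1)]; ring.
Qed.

Variable b : C.
Hypothesis hb : forall m : nat, b != - (m.+1)%:R.

Lemma hbne d k : (k < d)%N -> d%:R + b != k%:R.
Proof.
move=> hk; apply/negP => /eqP e; move/eqP: (hb (d - k.+1)); apply.
rewrite subnSK // natrB ?(ltnW hk) //.
have -> : b = (d%:R + b) - d%:R by ring.
by rewrite e; ring.
Qed.

Lemma hb1 d : d%:R + b + 1 != 0.
Proof.
apply/negP => /eqP e; move/eqP: (hb d); apply.
have -> : b = (d%:R + b + 1) - d%:R - 1 by ring.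
by rewrite e -natr1; ring.
Qed.

Lemma binb d j : (j <= d)%N -> binomC (d%:R + b) j != 0.
Proof. move=> hj; apply: binomC_neq0 => k hk; apply: hbne; lia. Qed.

Lemma binb1 d j : (j <= d.+1)%N -> binomC (d%:R + b + 1) j != 0.
Proof.
move=> hj; have -> : d%:R + b + 1 = (d.+1)%:R + b by rewrite -natr1; ring.
exact: binb.
Qed.

Lemma hb2 d : d%:R + b + 1 + 1 != 0.
Proof.
have -> : d%:R + b + 1 + 1 = (d.+1)%:R + b + 1 by rewrite -natr1; ring.
exact: hb1.
Qed.

Lemma id3 (c : C) n :
 \sum_(0 <= j < n.+1) \sum_(0 <= i < j.+1)
         binomC (n.+1)%:R i / binomC (n%:R + b) j * c ^+ (j - i)
      = \sum_(0 <= k < n.+1)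
         (n%:R + b + 1) / (b + 1) * ((c + 1) ^+ k / binomC (k%:R + b + 1) k).
Proof.
have hb0 : b + 1 != 0 by have := hb1 0; rewrite add0r.
elim: n => [|n IH].
  by rewrite !big_nat1 binomC0 subnn expr0 !binomC0 !mulr1 !divr1 add0r mulfV // mulr1.
rewrite -/(G _ _ _ _) in IH *.
have -> : (n.+2)%:R = (n.+1)%:R + 1 :> C by rewrite -natr1.
have -> : (n.+1)%:R + b = (n%:R + b) + 1 by rewrite -natr1; ring.
rewrite -[LHS]/(G _ _ c n.+2). rewrite G_step; last first.
- move=> j hj; apply: binomC_neq0 => k hk; apply: hbne; lia.
- exact: hb1.
rewrite T_binom [RHS]big_nat_recr //= IH; congr (_ + _).
- rewrite big_distrr; apply: eq_bigr => k _ /=. field. by rewrite binb1 // hb0 hb1.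
- have -> : (n.+1)%:R + b + 1 = (n%:R + b + 1) + 1 by rewrite -natr1; ring.
  have ra := binomC_rela (n%:R + b + 1) n.+1.
  have hQ : binomC (n%:R + b + 1) n.+1 != 0.
    apply: binomC_neq0 => k hk.
    have -> : n%:R + b + 1 = (n.+1)%:R + b by rewrite -natr1; ring.
    by apply: hbne.
  have hd : n%:R + b + 1 + 1 - (n.+1)%:R = b + 1 by rewrite -natr1; ring.
  rewrite hd in ra.
  have hQ2 : binomC (n%:R + b + 1 + 1) n.+1 = (n%:R + b + 1 + 1) * binomC (n%:R + b + 1) n.+1 / (b + 1).
    by rewrite ra mulrAC mulfV // mul1r.
  rewrite hQ2. field. by rewrite hb0 hQ hb2.
Qed.

Lemma id2_G n : G (2 * n + 3)%:R ((2 * n)%:R + b + 1) 1 n.+1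
  = \sum_(0 <= k < n.+1)
         ((2 * n)%:R + b + 2) / (k%:R + b + 1)
         * ((binomC (2 * k + 1)%:R k + 4%:R ^+ k * b / (k.+1)%:R)
            / binomC ((2 * k)%:R + b + 2) k.+1).
Proof.
have hb0 : b + 1 != 0 by have := hb1 0; rewrite add0r.
elim: n => [|n IH].
  rewrite /G !big_nat1 !binomC0 subnn expr0 !divr1 !mulr1 add0r expr0 mul1r.
  rewrite binomC1.
  have hb2' : b + 2 != 0 by have := hb1 1; rewrite (_ : 1%:R + b + 1 = b + 2) //; ring.
  field. by rewrite hb0 hb2'.
set x := ((2 * n + 3)%:R : C).
set y := (2 * n)%:R + b + 1.
have -> : ((2 * n.+1 + 3)%:R : C) = x + 1 + 1 by rewrite /x; ring.
have -> : (2 * n.+1)%:R + b + 1 = y + 1 + 1 by rewrite /y; ring.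
rewrite G_step; last first.
- move=> j hj; have -> : y + 1 = (2 * n + 1)%:R + b + 1 by rewrite /y; ring.
  apply: binb1; lia.
- have -> : y + 1 + 1 = (2 * n + 2)%:R + b + 1 by rewrite /y; ring.
  exact: hb1.
rewrite G_step; last first.
- move=> j hj; apply: binb1; lia.
- exact: hb2.
have -> : G x y 1 n = G x y 1 n.+1 - T x 1 n / binomC y n by rewrite G_split; ring.
rewrite IH T_pascal.
have hT1 : T x 1 n.+1 = 4%:R ^+ n.+1.
  rewrite /T -natrX -half_sum natr_sum; apply: eq_bigr => i _.
  by rewrite expr1n mulr1 binomC_nat.
have hT0 : T x 1 n = 4%:R ^+ n.+1 - binomC x n.+1 by rewrite -hT1 T_rec; ring.
rewrite hT1 hT0.
have hQ : binomC y n != 0 by apply: binb1; lia.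
have ra := binomC_rela y n. have rb2 := binomC_relb (y + 1) n.
have rb3 := binomC_relb (y + 1 + 1) n.+1.
rewrite [RHS]big_nat_recr //=.
have -> : ((2 * n.+1 + 1)%:R : C) = x by rewrite /x; ring.
have -> : (2 * n.+1)%:R + b + 2 = y + 1 + 1 + 1 by rewrite /y; ring.
have -> : \sum_(0 <= k < n.+1) (y + 1 + 1 + 1) / (k%:R + b + 1)
         * ((binomC (2 * k + 1)%:R k + 4%:R ^+ k * b / (k.+1)%:R)
            / binomC ((2 * k)%:R + b + 2) k.+1)
  = (y + 1 + 1 + 1) / (y + 1) * \sum_(0 <= k < n.+1) ((2 * n)%:R + b + 2) / (k%:R + b + 1)
         * ((binomC (2 * k + 1)%:R k + 4%:R ^+ k * b / (k.+1)%:R)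
            / binomC ((2 * k)%:R + b + 2) k.+1).
  rewrite big_distrr; apply: eq_bigr => k _ /=; rewrite /y; field.
  apply/and4P; split.
  - rewrite (_ : (2 * k)%:R + b + 2 = (2 * k + 1)%:R + b + 1); last by ring.
    apply: binb1; lia.
  - exact: natS_neq0.
  - exact: hb1.
  - rewrite (_ : 2 * n%:R + b + 1 + 1 = (2 * n)%:R + b + 1 + 1); last by ring.
    exact: hb2.
have hd : y + 1 - n%:R != 0.
  rewrite (_ : y + 1 - n%:R = (n.+1)%:R + b + 1); first exact: hb1.
  rewrite /y; ring.
have hn1 : (n.+1)%:R != 0 :> C by rewrite pnatr_eq0.
have hn2 : (n.+2)%:R != 0 :> C by rewrite pnatr_eq0.
have e1 : binomC (y + 1) n = (y + 1) * binomC y n / (y + 1 - n%:R).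
  by rewrite ra mulrAC mulfV // mul1r.
have e3 : binomC (y + 1 + 1) n.+1 = (y + 1 + 1) * binomC (y + 1) n / (n.+1)%:R.
  by rewrite rb2 mulrAC mulfV // mul1r.
have e4 : binomC (y + 1 + 1 + 1) n.+2 = (y + 1 + 1 + 1) * binomC (y + 1 + 1) n.+1 / (n.+2)%:R.
  by rewrite rb3 mulrAC mulfV // mul1r.
rewrite e4 e3 e1.
set S := \sum_(0 <= k < n.+1) _.
move: hQ hd; rewrite /y => hQ hd.
field.
rewrite nat2_neq0 natS_neq0 hQ /=; apply/and4P; split.
- rewrite (_ : 2 * n%:R + b + 1 + 1 - n%:R = (n.+1)%:R + b + 1); [exact: hb1 | ring].
- rewrite (_ : 2 * n%:R + b + 1 + 1 = (2 * n + 1)%:R + b + 1); [exact: hb1 | ring].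
- rewrite (_ : 2 * n%:R + b + 1 + 1 + 1 = (2 * n + 2)%:R + b + 1); [exact: hb1 | ring].
- rewrite (_ : 2 * n%:R + b + 1 + 1 + 1 + 1 = (2 * n + 3)%:R + b + 1); [exact: hb1 | ring].
Qed.
End S.

Theorem corollary1 (C : numClosedFieldType) (n : nat) (a b c : C)
  (hb : forall m : nat, b != - (m.+1)%:R) :
  [/\ \sum_(0 <= j < n.+1) \sum_(0 <= i < j.+1)
         binomC ((2 * n)%:R + a + 2) i / binomC (2 * n + 1)%:R j
      = \sum_(0 <= k < n.+1)
         (n.+1)%:R / (2 * k + 1)%:R * (binomC ((2 * k)%:R + a) k / binomC (2 * k)%:R k),
      \sum_(0 <= j < n.+1) \sum_(0 <= i < j.+1)
         binomC (2 * n + 3)%:R i / binomC ((2 * n)%:R + b + 1) j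
      = \sum_(0 <= k < n.+1)
         ((2 * n)%:R + b + 2) / (k%:R + b + 1)
         * ((binomC (2 * k + 1)%:R k + 4%:R ^+ k * b / (k.+1)%:R)
            / binomC ((2 * k)%:R + b + 2) k.+1),
      \sum_(0 <= j < n.+1) \sum_(0 <= i < j.+1)
         binomC (n.+1)%:R i / binomC (n%:R + b) j * c ^+ (j - i)
      = \sum_(0 <= k < n.+1)
         (n%:R + b + 1) / (b + 1) * ((c + 1) ^+ k / binomC (k%:R + b + 1) k)
    & \sum_(0 <= j < n.+1) \sum_(0 <= i < j.+1)
         binomC (n.+2)%:R i / binomC n%:R j * c ^+ (j - i + 1)
      = \sum_(0 <= k < n.+1)
         (n.+1)%:R / (k.+1)%:R * ((c + 1) ^+ k.+1 - 1)].
Proof.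
split.
- rewrite -id1_G /G; apply: eq_bigr => j _; apply: eq_bigr => i _.
  by rewrite expr1n mulr1.
- rewrite -(@id2_G C b hb n) /G; apply: eq_bigr => j _; apply: eq_bigr => i _.
  by rewrite expr1n mulr1.
- exact: id3.
- rewrite -id4_G /G mulr_sumr; apply: eq_bigr => j _.
  rewrite mulr_sumr; apply: eq_bigr => i _.
  by rewrite addn1 exprSr mulrA [RHS]mulrC.
Qed.
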